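(* Consider a mixed-integer program (the paper's neoadjuvant chance-constrained chemotherapy model) whose variables include effective concentrations $E_{d,s}$ ($d\in\mathcal{D}$, $s\in\{0,\dots,S\}$) and log cell populations $P^{(k)}_{q,s}$ ($q\in\mathcal{Q}$, $s\in\{0,\dots,S\}$, $k\in\{1,\dots,K\}$), and whose constraints include, for all $q,k$ and $s\in\{0,\dots,S-1\}$, $$P^{(k)}_{q,s+1}=P^{(k)}_{q,s}+h\Big(\Lambda\big(\ln N^{(k)}_{q,\infty}-P^{(k)}_{q,s}\big)-\sum_{d\in\mathcal{D}}\eta_{d,q}\exp\big(-\rho_{d,q}\,t(s)\big)E_{d,s}\Big),\qquad P^{(k)}_{q,0}=\ln N^{(k)}_{q,0},$$ where $h>0$, $\Lambda>0$, $\eta_{d,q}\ge 0$, $\rho_{d,q}$ are constants, $t(s)=sh$, and $N^{(k)}_{q,0},N^{(k)}_{q,\infty}>0$ are given scenario data (together with further constraints: linearization of $E_{d,s}=\max\{0,C_{d,s}-\beta_{d,\mathrm{eff}}\}$, discretized pharmacokinetics, chance constraints and operational constraints). Suppose $\Lambda h\le 1$. Let $(\mathbf{E}^{[1]},\mathbf{P}^{[1]})$ and $(\mathbf{E}^{[2]},\mathbf{P}^{[2]})$ be the corresponding components of two feasible solutions of this program, with $E^{[1]}_{d,s}\ge E^{[2]}_{d,s}$ for all $d\in\mathcal{D}$, $s\in\{0,\dots,S\}$. Then $P^{[1],(k)}_{q,S}\le P^{[2],(k)}_{q,S}$ for all $q\in\mathcal{Q}$ and $k\in\{1,\dots,K\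}$.
   Context: $\mathcal{D}$ is a finite set of drugs, $\mathcal{Q}$ a finite set of cancer cell types, and $k\in\{1,\dots,K\}$ indexes scenarios describing tumor heterogeneity (initial populations $N^{(k)}_{q,0}$ and limits $N^{(k)}_{q,\infty}$). $\eta_{d,q}\ge0$ is the fractional kill effect parameter of drug $d$ on cell type $q$ and $\rho_{d,q}$ the temporal resistance parameter. The planning horizon $[0,T]$ is discretized as $t(s)=sh$, $s=0,\dots,S$, $T=Sh$. *)

(* Defs.v *)
From mathcomp Require Import all_boot all_order all_algebra.
From mathcomp Require Import all_classical all_reals all_analysis.
Set Implicit Arguments. Unset Strict Implicit. Unset Printing Implicit Defensive.
Import Order.TTheory GRing.Theory Num.Theory.
Local Open Scope ring_scope.

Definition tgrid (R : realType) (h : R) (s : nat) : R := s%:R * h.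

(* Scenarios are indexed by 'I_K
   (i.e. k in {1..K} shifted to {0..K-1}). *)
Definition dynamics (R : realType) (D Q : finType) (K S : nat)
  (h Lam : R) (eta rho : D -> Q -> R) (N0 Ninf : 'I_K -> Q -> R)
  (E : D -> nat -> R) (P : 'I_K -> Q -> nat -> R) : Prop :=
  (forall k q, P k q 0%N = ln (N0 k q)) /\
  (forall k q s, (s < S)%N ->
     P k q s.+1 = P k q s + h * (Lam * (ln (Ninf k q) - P k q s)
                  - \sum_(d : D) eta d q * expR (- rho d q * tgrid h s) * E d s)).

(* Main.v *)
Require Import Defs.
From mathcomp Require Import all_boot all_order all_algebra.
From mathcomp Require Import all_classical all_reals all_analysis.
From mathcomp Require Import ring lra.
Import Order.TTheory GRing.Theory Num.Theory.
Local Open Scope ring_scope.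

(* The only property of
   feasibility used is that it includes the dynamics constraints. *)
Theorem theorem5 (R : realType) (D Q : finType) (K S : nat)
  (h Lam : R) (eta rho : D -> Q -> R) (N0 Ninf : 'I_K -> Q -> R)
  (Sol : Type) (feasible : Sol -> Prop)
  (Eof : Sol -> D -> nat -> R) (Pof : Sol -> 'I_K -> Q -> nat -> R)
  (hpos : 0 < h) (Lampos : 0 < Lam)
  (etanonneg : forall d q, 0 <= eta d q)
  (N0pos : forall k q, 0 < N0 k q) (Ninfpos : forall k q, 0 < Ninf k q)
  (feas_dyn : forall x, feasible x ->
     dynamics S h Lam eta rho N0 Ninf (Eof x) (Pof x))
  (hLam : Lam * h <= 1)
  (x1 x2 : Sol) (f1 : feasible x1) (f2 : feasible x2)
  (hE : forall d s, (s <= S)%N -> Eof x2 d s <= Eof x1 d s) :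
  forall q k, Pof x1 k q S <= Pof x2 k q S.
Proof.
move=> q k.
have [I1 T1] := feas_dyn _ f1.
have [I2 T2] := feas_dyn _ f2.
suff H : forall s, (s <= S)%N -> Pof x1 k q s <= Pof x2 k q s by exact: H.
elim=> [|s IH] Hs; first by rewrite I1 I2.
have Hs' : (s < S)%N by [].
have Hab := IH (ltnW Hs').
rewrite (T1 _ _ _ Hs') (T2 _ _ _ Hs').
set S1 := \sum_(d : D) _.
set S2 := \sum_(d : D) _.
have HS : S2 <= S1.
  rewrite /S1 /S2; apply: ler_sum => d _.
  apply: ler_wpM2l; last exact: hE (ltnW Hs').
  by apply: mulr_ge0; [exact: etanonneg | exact: expR_ge0].
have A1 : 0 <= (1 - Lam * h) * (Pof x2 k q s - Pof x1 k q s).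
  apply: mulr_ge0; lra.
have A2 : 0 <= h * (S1 - S2) by apply: mulr_ge0; lra.
set a := Pof x1 k q s in A1 Hab *.
set b := Pof x2 k q s in A1 Hab *.
set L := ln (Ninf k q).
have E : b + h * (Lam * (L - b) - S2) - (a + h * (Lam * (L - a) - S1))
   = (1 - Lam * h) * (b - a) + h * (S1 - S2) by ring.
rewrite -subr_ge0 E; lra.
Qed.
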